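(* Let $n\ge1$ and let $\boldsymbol{\xi}=(\xi_1,\dots,\xi_n)\in\mathbb{R}^n$ be an exchangeable random vector with $\mathbb{E}[\|\boldsymbol{\xi}\|_2^2]<\infty$, where $\|\boldsymbol{\xi}\|_2^2=\sum_i\xi_i^2$. Let $S_k=\xi_1+\dots+\xi_k$. Then for all $1\le k\le n$, $$\mathrm{Var}(S_k)\le\frac{k}{n}\,\mathbb{E}\big[\|\boldsymbol{\xi}\|_2^2\big]+\frac{k^2}{n^2}\,\mathrm{Var}(S_n).$$
   Context: Exchangeable means the law of $(\xi_{\sigma(1)},\dots,\xi_{\sigma(n)})$ equals that of $(\xi_1,\dots,\xi_n)$ for every permutation $\sigma$. *)

(* Defs.v *)
From HB Require Import structures.
From mathcomp Require Import all_boot all_order all_algebra all_fingroup.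
From mathcomp Require Import all_classical all_reals all_analysis.
Set Implicit Arguments. Unset Strict Implicit. Unset Printing Implicit Defensive.
Import Order.TTheory GRing.Theory Num.Theory.
Local Open Scope classical_set_scope.
Local Open Scope ring_scope.

(* The random vector xi takes values in R^n, modelled as n.-tuple R with its
   canonical product (coordinate-generated) sigma-algebra, i.e. Borel(R^n). *)

Definition coord {T : Type} {R : Type} (n : nat) (xi : T -> n.-tuple R)
  (i : 'I_n) : T -> R := fun w => tnth (xi w) i.

Definition permvec {T : Type} {R : Type} (n : nat) (s : 'S_n)
  (xi : T -> n.-tuple R) : T -> n.-tuple R :=
  fun w => [tuple tnth (xi w) (s i) | i < n].

Definition exchangeable d (T : measurableType d) (R : realType)
  (P : probability T R) (n : nat) (xi : T -> n.-tuple R) : Prop :=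
  forall (s : 'S_n) (B : set (n.-tuple R)), measurable B ->
    P (permvec s xi @^-1` B) = P (xi @^-1` B).

(* partial sums S_k = xi_1 + ... + xi_k (0-indexed coordinates i < k) *)
Definition partial_sum {T : Type} {R : realType} (n : nat)
  (xi : T -> n.-tuple R) (k : nat) : T -> R :=
  fun w => \sum_(i < n | (i < k)%N) coord xi i w.

Definition sqnorm {T : Type} {R : realType} (n : nat)
  (xi : T -> n.-tuple R) : T -> R :=
  fun w => \sum_(i < n) (coord xi i w) ^+ 2.

(* Main.v *)
Require Import Defs.
From HB Require Import structures.
From mathcomp Require Import all_boot all_order all_algebra all_fingroup.
From mathcomp Require Import all_classical all_reals all_analysis.
From mathcomp Require Import measurable_realfun.
From mathcomp Require Import lra ring.
Import Order.TTheory GRing.Theory Num.Theory.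
Local Open Scope classical_set_scope.
Local Open Scope ring_scope.
Local Notation coord := Defs.coord.
Lemma final_ineq (R : realFieldType) (K N sig c m : R) : 1 <= K -> K < N -> 0 <= sig ->
  0 <= N * (N * c + (sig - c)) - (N * m) ^+ 2 ->
  K * (K * c + (sig - c)) - (K * m) ^+ 2 <=
  K / N * (N * sig) + K ^+ 2 / N ^+ 2 * (N * (N * c + (sig - c)) - (N * m) ^+ 2).
Proof.
move=> K1 KN s0 V0.
have N0 : 0 < N by lra.
have h1 : 0 <= N * c + sig - c - N * m ^+ 2.
  have e : N * (N * c + (sig - c)) - (N * m) ^+ 2 = N * (N * c + sig - c - N * m ^+ 2) by ring.
  by rewrite e pmulr_rge0 in V0.
have h2 : 0 <= (N - 1) * (K * sig + (N - K) * c).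
  have hm : 0 <= m ^+ 2 by exact: sqr_ge0.
  have : 0 <= (N - K) * (N * c + sig - c - N * m ^+ 2) by apply: mulr_ge0; lra.
  have : 0 <= N * (K - 1) * sig by apply: mulr_ge0 => //; apply: mulr_ge0; lra.
  have : 0 <= (N - K) * N * m ^+ 2 by apply: mulr_ge0 => //; apply: mulr_ge0; lra.
  move=> a b c'. 
  have -> : (N - 1) * (K * sig + (N - K) * c) = (N - K) * (N * c + sig - c - N * m ^+ 2) + N * (K - 1) * sig + (N - K) * N * m ^+ 2 by ring.
  lra.
have h3 : 0 <= K * sig + (N - K) * c.
  by move: h2; rewrite pmulr_rge0 //; lra.
rewrite -subr_ge0.
have -> : K / N * (N * sig) + K ^+ 2 / N ^+ 2 * (N * (N * c + (sig - c)) - (N * m) ^+ 2) - (K * (K * c + (sig - c)) - (K * m) ^+ 2) = K / N * (K * sig + (N - K) * c).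
  by field; lra.
apply: mulr_ge0 => //; apply: divr_ge0; lra.
Qed.

Section S.
Context d (T : measurableType d) (R : realType) (P : probability T R) (n : nat) (xi : T -> n.-tuple R).
Hypothesis mxi : measurable_fun setT xi.
Hypothesis exch : exchangeable P xi.

Lemma mpermvec s : measurable_fun setT (permvec s xi).
Proof.
apply/measurable_fun_tnthP => i.
have -> : ((fun t => tnth t i) \o permvec s xi) = ((fun t => tnth t (s i)) \o xi).
  by apply/funext => w; rewrite /= /permvec tnth_map tnth_ord_tuple.
exact: measurableT_comp (measurable_tnth _) mxi.
Qed.

Lemma exchE s (f : n.-tuple R -> R) : measurable_fun setT f ->
  (f \o xi) \in Lfun P 1 -> (f \o permvec s xi) \in Lfun P 1 ->
  'E_P[f \o permvec s xi]%E = 'E_P[f \o xi]%E.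
Proof.
move=> mf /Lfun1_integrable i1 /Lfun1_integrable i2.
rewrite unlock.
have mEf : measurable_fun [set: n.-tuple R] (EFin \o f) by exact/measurable_EFinP.
have e1 : (\int[P]_w (f (permvec s xi w))%:E = \int[pushforward P (permvec s xi)]_y (f y)%:E)%E.
  by rewrite (integral_pushforward (mpermvec s) mEf) ?preimage_setT.
have e2 : (\int[P]_w (f (xi w))%:E = \int[pushforward P xi]_y (f y)%:E)%E.
  by rewrite (integral_pushforward mxi mEf) ?preimage_setT.
rewrite e1 e2.
apply: (@eq_measure_integral _ _ _ _ (measure_function_pushforward__canonical__measure_function_Measure P mxi) (measure_function_pushforward__canonical__measure_function_Measure P (mpermvec s))) => A mA _ /=.
exact: exch.
Qed.

Hypothesis sqfin : ('E_P[sqnorm xi] < +oo)%E.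

Lemma mcoord (i : 'I_n) : measurable_fun setT (coord xi i).
Proof. exact: measurableT_comp (@measurable_tnth _ _ _ i) mxi. Qed.

Lemma msq : measurable_fun setT (sqnorm xi).
Proof.
apply: measurable_sum => i; apply: measurable_funX; exact: mcoord.
Qed.

Lemma sq_ge0 w : 0 <= sqnorm xi w.
Proof. by apply: sumr_ge0 => i _; exact: sqr_ge0. Qed.

Lemma coord_le_sq (i : 'I_n) w : coord xi i w ^+ 2 <= sqnorm xi w.
Proof.
rewrite /sqnorm (bigD1 i) //= lerDl.
by apply: sumr_ge0 => j _; exact: sqr_ge0.
Qed.

Lemma sq_L1 : sqnorm xi \in Lfun P 1.
Proof.
apply/Lfun1_integrable; apply/integrableP; split.
  exact/measurable_EFinP/msq.
move: sqfin; rewrite unlock; apply: le_lt_trans.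
apply: ge0_le_integral => //.
all: try by move=> w _ /=; rewrite ?lee_fin ?ger0_norm ?sq_ge0.
all: try by apply/measurable_EFinP; exact: msq.
all: try by apply/measurable_EFinP; apply: measurableT_comp => //; exact: msq.
all: try by apply: measurableT_comp => //; apply/measurable_EFinP; exact: msq.
all: idtac.
Qed.

Lemma prod_L1 (i j : 'I_n) : (coord xi i * coord xi j) \in Lfun P 1.
Proof.
apply/Lfun1_integrable.
have /Lfun1_integrable isq := sq_L1.
apply: (le_integrable measurableT _ _ isq).
  by apply/measurable_EFinP; apply: measurable_funM; exact: mcoord.
move=> w _ /=; rewrite lee_fin (ger0_norm (sq_ge0 w)).
change (`|coord xi i w * coord xi j w| <= sqnorm xi w).
have hi := coord_le_sq i w; have hj := coord_le_sq j w.
rewrite normrM.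
set a := coord xi i w in hi *; set b := coord xi j w in hj *.
have : 2 * (`|a| * `|b|) <= a ^+ 2 + b ^+ 2.
  rewrite -[a ^+ 2]real_normK ?num_real// -[b ^+ 2]real_normK ?num_real//.
  have := sqr_ge0 (`|a| - `|b|). rewrite sqrrB. lra.
lra.
Qed.

Lemma coord_L1 (i : 'I_n) : coord xi i \in Lfun P 1.
Proof.
have h1 : (cst 1 + sqnorm xi) \in Lfun P 1 by rewrite rpredD ?Lfun_cst ?sq_L1.
apply/Lfun1_integrable.
move/Lfun1_integrable : h1 => h1.
apply: (le_integrable measurableT _ _ h1).
  exact/measurable_EFinP/mcoord.
move=> w _ /=; rewrite lee_fin (@ger0_norm _ (1 + sqnorm xi w)); last by have := sq_ge0 w; lra.
have := coord_le_sq i w; set a := coord xi i w => ha.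
have : `|a| <= 1 + a ^+ 2.
  rewrite -[a ^+ 2]real_normK ?num_real//.
  have := sqr_ge0 (`|a| - 1). rewrite sqrrB. have := normr_ge0 a. nra.
move=> h; lra.
Qed.


Lemma E_sum (Q : pred 'I_n) (F : 'I_n -> T -> R) :
  (forall i, F i \in Lfun P 1) ->
  (\sum_(i | Q i) F i) \in Lfun P 1 /\
  'E_P[\sum_(i | Q i) F i]%E = (\sum_(i | Q i) fine 'E_P[F i])%:E.
Proof.
move=> HF; elim/big_rec2: _ => [|i y1 y2 Qi [IH1 IH2]].
  split; first exact: rpred0.
  exact: (expectation_cst P 0).
split; first by rewrite rpredD.
rewrite expectationD// IH2 EFinD fineK ?expectation_fin_num//.
Qed.

Definition mu i := fine 'E_P[coord xi i]%E.
Definition mm i j := fine 'E_P[coord xi i * coord xi j]%E.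

Lemma psE k : partial_sum xi k = \sum_(i < n | (i < k)%N) coord xi i.
Proof. by rewrite fct_sumE. Qed.

Lemma var_ps k : 'V_P[partial_sum xi k]%E =
  ((\sum_(i < n | (i < k)%N) \sum_(j < n | (j < k)%N) mm i j)
   - (\sum_(i < n | (i < k)%N) mu i) ^+ 2)%:E.
Proof.
rewrite psE.
have [L1 E1] := E_sum (fun i => (i < k)%N) (coord xi) coord_L1.
have SS : (\sum_(i < n | (i < k)%N) coord xi i) * (\sum_(i < n | (i < k)%N) coord xi i) = \sum_(i < n | (i < k)%N) \sum_(j < n | (j < k)%N)
    (coord xi i * coord xi j :> (T -> R)).
  rewrite mulr_suml; apply: eq_bigr => i _; by rewrite mulr_sumr.
have [L2 E2] := E_sum (fun i => (i < k)%N)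
  (fun i => \sum_(j < n | (j < k)%N) (coord xi i * coord xi j))
  (fun i => proj1 (E_sum (fun j => (j < k)%N) (fun j => coord xi i * coord xi j) (prod_L1 i))).
rewrite /variance covarianceE// ?SS//.
rewrite E2 E1.
under eq_bigr => i _ do rewrite (proj2 (E_sum (fun j => (j < k)%N) (fun j => coord xi i * coord xi j) (prod_L1 i))) /=.
by rewrite -EFinM -EFinB expr2.
Qed.

Lemma E_sq : 'E_P[sqnorm xi]%E = (\sum_(i < n) mm i i)%:E.
Proof.
have -> : sqnorm xi = \sum_(i < n) (coord xi i * coord xi i).
  by rewrite fct_sumE; apply/funext => w; apply: eq_bigr => i _; rewrite expr2.
exact: (proj2 (E_sum xpredT _ (fun i => prod_L1 i i))).
Qed.


Lemma coord_perm (s : 'S_n) i : (fun t => tnth t i) \o permvec s xi = coord xi (s i).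
Proof. by apply/funext => w; rewrite /= /permvec tnth_map tnth_ord_tuple. Qed.

Lemma prod_perm (s : 'S_n) i j : (fun t => tnth t i * tnth t j) \o permvec s xi =
  coord xi (s i) * coord xi (s j).
Proof. by apply/funext => w; rewrite /= /permvec !tnth_map !tnth_ord_tuple. Qed.

Lemma mu_perm (s : 'S_n) i : mu (s i) = mu i.
Proof.
have L : ((fun t => tnth t i) \o permvec s xi) \in Lfun P 1.
  by rewrite coord_perm; exact: coord_L1.
have e := @exchE s (fun t => tnth t i) (@measurable_tnth _ _ _ i) (coord_L1 i) L.
by rewrite coord_perm in e; rewrite /mu e.
Qed.

Lemma mm_perm (s : 'S_n) i j : mm (s i) (s j) = mm i j.
Proof.
have L : ((fun t => tnth t i * tnth t j) \o permvec s xi) \in Lfun P 1.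
  by rewrite prod_perm; exact: prod_L1.
have mf : measurable_fun setT (fun t : n.-tuple R => tnth t i * tnth t j).
  exact: measurable_funM (@measurable_tnth _ _ _ i) (@measurable_tnth _ _ _ j).
have e := @exchE s _ mf (prod_L1 i j) L.
by rewrite prod_perm in e; rewrite /mm e.
Qed.

Lemma sum_const_k (x : R) k : (k <= n)%N -> \sum_(i < n | (i < k)%N) x = k%:R * x.
Proof.
move=> hk; rewrite -(big_ord_widen _ (fun _ => x) hk) sumr_const card_ord.
by rewrite mulr_natl.
Qed.

Lemma mm_ge0 i : 0 <= mm i i.
Proof.
rewrite /mm; apply: fine_ge0; apply: expectation_ge0 => w.
by rewrite /= -expr2 sqr_ge0.
Qed.


Lemma main_ineq k : (1 <= n)%N -> (1 <= k <= n)%N ->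
  ('V_P[partial_sum xi k] <=
     (k%:R / n%:R)%:E * 'E_P[sqnorm xi]
     + (k%:R ^+ 2 / n%:R ^+ 2)%:E * 'V_P[partial_sum xi n])%E.
Proof.
move=> n1 /andP[k1 kn].
have V0 := variance_ge0 P (partial_sum xi n).
rewrite !var_ps E_sq in V0 *.
rewrite -!EFinM -EFinD lee_fin.
rewrite lee_fin in V0.
have n0 : (0 < n)%N by [].
pose i0 : 'I_n := Ordinal n0.
have mu_c i : mu i = mu i0 by rewrite -(mu_perm (tperm i0 i) i0) tpermL.
have mm_c i : mm i i = mm i0 i0 by rewrite -(mm_perm (tperm i0 i) i0 i0) tpermL.
have sum_mu k' : (k' <= n)%N -> \sum_(i < n | (i < k')%N) mu i = k'%:R * mu i0.
  by move=> hk; under eq_bigr => i _ do rewrite mu_c; rewrite sum_const_k.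
have E0 : 0 <= \sum_(i < n) mm i i by apply: sumr_ge0 => i _; exact: mm_ge0.
have [kE|kltn] := eqVneq k n.
  subst k.
  have nR : n%:R != 0 :> R by rewrite pnatr_eq0 -lt0n.
  rewrite divff // mul1r divff ?expf_neq0 // mul1r.
  lra.
have kln : (k < n)%N by rewrite ltn_neqAle kltn kn.
have n2 : (1 < n)%N by apply: leq_ltn_trans kln.
pose i1 : 'I_n := Ordinal n2.
have i01 : i0 != i1 by [].
have mm_off i j : i != j -> mm i j = mm i0 i1.
  move=> ij.
  pose j1 := tperm i0 i i1.
  have j1i : j1 != i.
    rewrite -[X in _ != X](tpermL i0 i) /j1.
    by rewrite (inj_eq (@perm_inj _ (tperm i0 i))) eq_sym.
  pose s : 'S_n := (tperm i0 i * tperm j1 j)%g.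
  have si0 : s i0 = i by rewrite permM tpermL tpermD // eq_sym.
  have si1 : s i1 = j by rewrite permM -/j1 tpermL.
  by rewrite -(mm_perm s i0 i1) si0 si1.
have mm_all i j : mm i j = mm i0 i1 + (i == j)%:R * (mm i0 i0 - mm i0 i1).
  have [->|ij] := eqVneq i j; first by rewrite mm_c /=; ring.
  by rewrite mm_off // /=; ring.
have dsum k' : (k' <= n)%N -> \sum_(i < n | (i < k')%N) \sum_(j < n | (j < k')%N) mm i j
    = k'%:R * (k'%:R * mm i0 i1 + (mm i0 i0 - mm i0 i1)).
  move=> hk.
  rewrite -sum_const_k //; apply: eq_bigr => i ik.
  under eq_bigr => j _ do rewrite mm_all.
  rewrite big_split /= sum_const_k //; congr (_ + _).
  rewrite (bigD1 i) //= eqxx mul1r big1 ?addr0 // => j /andP[_ ji].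
  by rewrite eq_sym (negbTE ji) mul0r.
rewrite !dsum // ?sum_mu // in V0 *.
have esq : \sum_(i < n) mm i i = n%:R * mm i0 i0.
  by under eq_bigr => i _ do rewrite mm_c; rewrite sumr_const card_ord mulr_natl.
rewrite esq.
apply: final_ineq.
- by rewrite ler1n.
- by rewrite ltr_nat.
- exact: mm_ge0.
- exact: V0.
Qed.

End S.

Theorem proposition6p5 (d : measure_display) (T : measurableType d)
  (R : realType) (P : probability T R) (n : nat) (xi : T -> n.-tuple R) :
  (1 <= n)%N ->
  measurable_fun setT xi ->
  exchangeable P xi ->
  ('E_P[sqnorm xi] < +oo)%E ->
  forall k : nat, (1 <= k <= n)%N ->
  ('V_P[partial_sum xi k] <=
     (k%:R / n%:R)%:E * 'E_P[sqnorm xi]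
     + (k%:R ^+ 2 / n%:R ^+ 2)%:E * 'V_P[partial_sum xi n])%E.
Proof.
move=> n1 mxi ex sq k hk.
exact: main_ineq.
Qed.
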